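(* Let $A$ be a commutative algebra over a field with multiplication $\star$ satisfying the Tortken identity $$(a\star b)\star(c\star d)-(a\star d)\star(c\star b)=(a,b,c)\star d-(a,d,c)\star b\quad\text{for all }a,b,c,d\in A.$$ Then for all $a,b,c,x\in A$: $(a,x,b)\star c+(b,x,c)\star a+(c,x,a)\star b=0$.
   Context: The associator is $(a,b,c)=a\star(b\star c)-(a\star b)\star c$. *)

(* Defs.v *)
From mathcomp Require Import all_boot all_order all_algebra.
Set Implicit Arguments. Unset Strict Implicit. Unset Printing Implicit Defensive.
Import GRing.Theory.
Local Open Scope ring_scope.

Definition bilinear_mul (K : fieldType) (V : lmodType K) (mul : V -> V -> V) : Prop :=
  (forall k a b c, mul (k *: a + b) c = k *: mul a c + mul b c) /\
  (forall k a b c, mul a (k *: b + c) = k *: mul a b + mul a c).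

Definition commutative_mul (V : Type) (mul : V -> V -> V) : Prop :=
  forall a b, mul a b = mul b a.

Definition assoc (K : fieldType) (V : lmodType K) (mul : V -> V -> V) (a b c : V) : V :=
  mul a (mul b c) - mul (mul a b) c.

Definition tortken (K : fieldType) (V : lmodType K) (mul : V -> V -> V) : Prop :=
  forall a b c d : V,
    mul (mul a b) (mul c d) - mul (mul a d) (mul c b)
    = mul (assoc mul a b c) d - mul (assoc mul a d c) b.

(* Main.v *)
Require Import Defs.
From mathcomp Require Import all_boot all_order all_algebra.
Local Open Scope ring_scope.
Import GRing.Theory.

Lemma cyc (V : zmodType) (P Q R M1 M2 M3 : V) : M1 + M2 + M3 = 0 ->
  P - Q + M1 + (Q - R + M2) + (R - P + M3) = 0.
Proof.
move=> h. rewrite -[RHS]h.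
rewrite [P - Q + M1]addrC [Q - R + M2]addrC [R - P + M3]addrC.
rewrite -!addrA; congr (_ + _).
rewrite (addrCA M3 R) addKr (addrCA M2 Q) addKr.
rewrite (addrCA P M2) (addrCA P M3) subrr addr0 //.
Qed.
Lemma cyc0 (V : zmodType) (P Q R : V) : P - Q + (Q - R) + (R - P) = 0.
Proof. by rewrite -(addr0 (P - Q)) -(addr0 (Q - R)) -(addr0 (R - P)) cyc // !addr0. Qed.

Theorem mainTheorem6 (K : fieldType) (V : lmodType K) (mul : V -> V -> V)
  (Hbil : bilinear_mul mul) (Hcomm : commutative_mul mul) (Htk : tortken mul) :
  forall a b c x : V,
    mul (assoc mul a x b) c + mul (assoc mul b x c) a + mul (assoc mul c x a) b = 0.
Proof.
move=> a b c x.
have addl : forall u v w, mul (u + v) w = mul u w + mul v w.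
  by move=> u v w; have := (proj1 Hbil) 1 u v w; rewrite !scale1r.
have zl : forall w, mul 0 w = 0.
  by move=> w; apply: (addrI (mul 0 w)); rewrite addr0 -addl addr0.
have e1 := Htk a x b c; have e2 := Htk b x c a; have e3 := Htk c x a b.
have mv : forall L R M : V, L = R - M -> R = L + M.
  by move=> L R M ->; rewrite subrK.
rewrite (mv _ _ _ e1) (mv _ _ _ e2) (mv _ _ _ e3).
have hs : assoc mul a c b + assoc mul b a c + assoc mul c b a = 0.
  rewrite /assoc (Hcomm c b) (Hcomm a c) (Hcomm b a).
  rewrite (Hcomm a (mul b c)) (Hcomm b (mul c a)) (Hcomm c (mul a b)).
  exact: cyc0.
have hm : mul (assoc mul a c b) x + mul (assoc mul b a c) x + mul (assoc mul c b a) x = 0.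
  by rewrite -!addl hs zl.
rewrite (Hcomm c b) (Hcomm a c) (Hcomm b a).
rewrite (Hcomm (mul b c) (mul a x)) (Hcomm (mul c a) (mul b x)) (Hcomm (mul a b) (mul c x)).
exact: cyc.
Qed.
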